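(* Let $n\ge2$, $b_1,\dots,b_n\in\mathbb{R}^d$ with $\|b_i\|\le R'$ ($R'>0$), $B=\frac1n[b_1,\dots,b_n]^T$, each $g_i^*:\mathbb{R}\to\mathbb{R}\cup\{+\infty\}$ proper, lower semicontinuous, convex, $g^*(y)=\frac1n\sum_ig_i^*(y_i)$, and $\ell:\mathbb{R}^d\to\mathbb{R}\cup\{+\infty\}$ proper, lower semicontinuous, $\sigma$-strongly convex ($\sigma\ge0$). For the VRPDA$^2$ algorithm in the context, for all $k\ge2$ and all $(u,v)\in\mathcal{X}\times\mathcal{Y}$ (for every realization of the random indices), $$\psi_k(y_k)\le\sum_{i=2}^ka_ig^*_{j_i}(v_{j_i})+a_1g^*(v)+\frac n2\|v-y_0\|^2-\frac n2\|v-y_k\|^2,$$ $$\phi_k(x_k)\le A_k\ell(u)+\frac n2\|u-x_0\|^2-\frac{n+\sigma A_k}{2}\|u-x_k\|^2.$$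
   Context: Norms are Euclidean; $\sigma$-strong convexity of $f$ means $f((1-\alpha)x+\alpha\hat x)\le(1-\alpha)f(x)+\alpha f(\hat x)-\frac\sigma2\alpha(1-\alpha)\|\hat x-x\|^2$. $\mathcal{X}=\mathrm{dom}(\ell)$, $\mathcal{Y}=\mathrm{dom}(g^* )$; $y_{k,j}$ is the $j$-th coordinate of $y_k$. VRPDA$^2$ algorithm: given $(x_0,y_0),(u,v)\in\mathcal{X}\times\mathcal{Y}$: $\phi_0(x)=\frac12\|x-x_0\|^2$, $\psi_0(y)=\frac12\|y-y_0\|^2$, $a_0=A_0=0$, $\tilde a_1=\frac1{2R'}$; $\tilde\psi_1(y)=\psi_0(y)+\tilde a_1(\langle-Bx_0,y-v\rangle+g^*(y))$, $y_1=\arg\min\tilde\psi_1$; $z_1=B^Ty_1$; $\tilde\phi_1(x)=\phi_0(x)+\tilde a_1(\langle x-u,z_1\rangle+\ell(x))$, $x_1=\arg\min\tilde\phi_1$; $\psi_1=n\tilde\psi_1$, $\phi_1=n\tilde\phi_1$, $a_1=A_1=n\tilde a_1$, $a_2=\frac{a_1}{n-1}$, $A_2=A_1+a_2$. For $k=2,3,\dots$: $\bar x_{k-1}=x_{k-1}+\frac{a_{k-1}}{a_k}(x_{k-1}-x_{k-2})$; pick $j_k$ uniformly at random from $\{1,\dots,n\}$; $\psi_k(y)=\psi_{k-1}(y)+a_k(-b_{j_k}^T\bar x_{k-1}(y_{j_k}-v_{j_k})+g^*_{j_k}(y_{j_k}))$, $y_k=\arg\min_y\psi_k(y)$; $\phi_k(x)=\phi_{k-1}(x)+a_k(\langle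 x-u,z_{k-1}+(y_{k,j_k}-y_{k-1,j_k})b_{j_k}\rangle+\ell(x))$, $x_k=\arg\min_x\phi_k(x)$; $z_k=z_{k-1}+\frac1n(y_{k,j_k}-y_{k-1,j_k})b_{j_k}$; $a_{k+1}=\min\{(1+\frac1{n-1})a_k,\frac{\sqrt{n(n+\sigma A_k)}}{2R'}\}$, $A_{k+1}=A_k+a_{k+1}$. *)

(* Defs.v *)
From mathcomp Require Import all_boot all_order all_algebra.
From mathcomp Require Import all_classical all_reals all_analysis.

Import Order.TTheory GRing.Theory Num.Theory.
Local Open Scope ring_scope.

Section VRPDA2.
Context {R : realType}.

Definition dotp {m : nat} (x y : 'rV[R]_m) : R := \sum_(i < m) x ord0 i * y ord0 i.
Definition sqnorm {m : nat} (x : 'rV[R]_m) : R := dotp x x.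
Definition enorm {m : nat} (x : 'rV[R]_m) : R := Num.sqrt (sqnorm x).

Local Open Scope ereal_scope.

Definition proper_fun {T : Type} (f : T -> \bar R) : Prop :=
  (forall x, f x != -oo) /\ (exists x, f x < +oo).

Definition convex_ext (f : R -> \bar R) : Prop :=
  forall (x y alpha : R), (0 < alpha < 1)%R ->
    f ((1 - alpha) * x + alpha * y)%R <=
    ((1 - alpha)%R)%:E * f x + alpha%:E * f y.

Definition strongly_convex {m : nat} (sigma : R) (f : 'rV[R]_m -> \bar R) : Prop :=
  forall (x xh : 'rV[R]_m) (alpha : R), (0 < alpha < 1)%R ->
    f ((1 - alpha) *: x + alpha *: xh)%R <=
    ((1 - alpha)%R)%:E * f x + alpha%:E * f xh
      - (sigma / 2 * alpha * (1 - alpha) * sqnorm (xh - x))%:E.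

Definition is_argmin {T : Type} (f : T -> \bar R) (x : T) : Prop :=
  forall x', f x <= f x'.

Variables (n d : nat) (b : 'I_n -> 'rV[R]_d) (Rp sigma : R)
  (gs : 'I_n -> R -> \bar R) (ell : 'rV[R]_d -> \bar R).

Definition gstar (y : 'rV[R]_n) : \bar R :=
  (n%:R^-1)%:E * \sum_(i < n) gs i (y ord0 i).

(* B = (1/n)[b_1,...,b_n]^T : B x and B^T y *)
Definition Bmul (x : 'rV[R]_d) : 'rV[R]_n := \row_(i < n) (n%:R^-1 * dotp (b i) x)%R.
Definition BTmul (y : 'rV[R]_n) : 'rV[R]_d := (n%:R^-1 *: \sum_(i < n) y ord0 i *: b i)%R.

(* step sizes: atilde_1 = 1/(2R'), a_1 = A_1 = n atilde_1, a_2 = a_1/(n-1),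
   a_{k+1} = min{(1+1/(n-1)) a_k, sqrt(n(n+sigma A_k))/(2R')} for k >= 2 *)
Definition at1 : R := (2 * Rp)^-1.
Definition a1 : R := (n%:R * at1)%R.

Fixpoint aA (k : nat) : R * R :=
  match k with
  | 0 => (0%R, 0%R)
  | 1 => (a1, a1)
  | 2 => ((a1 / (n.-1)%:R)%R, (a1 + a1 / (n.-1)%:R)%R)
  | S ((S (S _)) as k') =>
      let ak := (aA k').1 in
      let Ak := (aA k').2 in
      let anew := Num.min ((1 + (n.-1)%:R^-1) * ak)%R
                          (Num.sqrt (n%:R * (n%:R + sigma * Ak)) / (2 * Rp))%R in
      (anew, (Ak + anew)%R)
  end.

Definition aseq (k : nat) : R := (aA k).1.
Definition Aseq (k : nat) : R := (aA k).2.

Variables (x0 : 'rV[R]_d) (y0 : 'rV[R]_n) (u : 'rV[R]_d) (v : 'rV[R]_n)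
  (xs : nat -> 'rV[R]_d) (ys : nat -> 'rV[R]_n) (j : nat -> 'I_n).

Fixpoint zseq (k : nat) : 'rV[R]_d :=
  match k with
  | 0 => 0%R
  | 1 => BTmul (ys 1)
  | S ((S _) as k') =>
      (zseq k' + (n%:R^-1 * (ys k ord0 (j k) - ys k' ord0 (j k))) *: b (j k))%R
  end.

Definition xbar (k : nat) : 'rV[R]_d :=
  (xs k + (aseq k / aseq k.+1) *: (xs k - xs k.-1))%R.

Definition psi0 (y : 'rV[R]_n) : \bar R := (2^-1 * sqnorm (y - y0))%:E.
Definition phi0 (x : 'rV[R]_d) : \bar R := (2^-1 * sqnorm (x - x0))%:E.

Definition psit1 (y : 'rV[R]_n) : \bar R :=
  psi0 y + at1%:E * ((dotp (- Bmul x0) (y - v))%R%:E + gstar y).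

Definition phit1 (x : 'rV[R]_d) : \bar R :=
  phi0 x + at1%:E * ((dotp (x - u) (zseq 1))%:E + ell x).

Fixpoint psi (k : nat) (y : 'rV[R]_n) : \bar R :=
  match k with
  | 0 => psi0 y
  | 1 => n%:R%:E * psit1 y
  | S ((S _) as k') =>
      psi k' y + (aseq k)%:E *
        ((- dotp (b (j k)) (xbar k') * (y ord0 (j k) - v ord0 (j k)))%R%:E
         + gs (j k) (y ord0 (j k)))
  end.

Fixpoint phi (k : nat) (x : 'rV[R]_d) : \bar R :=
  match k with
  | 0 => phi0 x
  | 1 => n%:R%:E * phit1 x
  | S ((S _) as k') =>
      phi k' x + (aseq k)%:E *
        ((dotp (x - u) (zseq k' + (ys k ord0 (j k) - ys k' ord0 (j k)) *: b (j k)))%R%:E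
         + ell x)
  end.

Definition vrpda2_run : Prop :=
  [/\ xs 0 = x0, ys 0 = y0,
      is_argmin psit1 (ys 1), is_argmin phit1 (xs 1) &
      forall k, (2 <= k)%N -> is_argmin (psi k) (ys k) /\ is_argmin (phi k) (xs k)].

End VRPDA2.

(* Main.v *)
Require Import Defs.
From mathcomp Require Import all_boot all_order all_algebra.
From mathcomp Require Import all_classical all_reals all_analysis.
From mathcomp Require Import ring lra.
Import Order.TTheory GRing.Theory Num.Theory numFieldNormedType.Exports.
Local Open Scope ring_scope.

Definition Kf {R : realType} {m : nat} (a : R) (x y : 'rV[R]_m) : R :=
  a * (1 - a) * sqnorm (y - x) / 2.

Definition SC {R : realType} {m : nat} (c : R) (F : 'rV[R]_m -> \bar R) : Prop :=
  (forall x, F x != -oo%E) /\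
  forall (x y : 'rV[R]_m) (a : R), 0 < a < 1 ->
    (F ((1 - a) *: x + a *: y)%R + (c * Kf a x y)%:E <= (1 - a)%:E * F x + a%:E * F y)%E.

Lemma sqnorm_ge0 {R : realType} {m : nat} (x : 'rV[R]_m) : 0 <= sqnorm x.
Proof. rewrite /sqnorm /dotp; apply: sumr_ge0 => i _; rewrite -expr2; exact: sqr_ge0. Qed.

Lemma Kf_ge0 {R : realType} {m : nat} (a : R) (x y : 'rV[R]_m) : 0 < a < 1 -> 0 <= Kf a x y.
Proof.
move=> /andP[a0 a1]; rewrite /Kf; apply: divr_ge0 => //.
apply: mulr_ge0; last exact: sqnorm_ge0.
apply: mulr_ge0; lra.
Qed.

Lemma nNy_adde_def {R : realType} (x y : \bar R) : x != -oo%E -> y != -oo%E -> (x +? y)%E.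
Proof. by move: x y => [x||] [y||]. Qed.

Lemma mul_nNy {R : realType} (r : R) (y : \bar R) : 0 <= r -> y != -oo%E -> (r%:E * y != -oo)%E.
Proof.
move=> r0 yn; rewrite mule_eq_ninfty (negbTE yn) /=.
have h : (r%:E < 0)%E = false by rewrite ltNge; apply/negbF; exact: r0.
by case: y yn => [y||] //= _; rewrite h !andbF.
Qed.

Lemma SC_ext {R : realType} {m : nat} (c : R) (F G : 'rV[R]_m -> \bar R) :
  (forall x, F x = G x) -> SC c F -> SC c G.
Proof. by move=> /boolp.funext ->. Qed.

Lemma SC_add {R : realType} {m : nat} (c c1 c2 : R) (F G : 'rV[R]_m -> \bar R) :
  c <= c1 + c2 -> SC c1 F -> SC c2 G -> SC c (fun x => F x + G x)%E.
Proof.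
move=> cle [Fn HF] [Gn HG]; split.
  by move=> x; rewrite adde_eq_ninfty negb_or Fn Gn.
move=> x y a a01; have K0 := Kf_ge0 a x y a01.
apply: (@le_trans _ _ (F ((1 - a) *: x + a *: y)%R + G ((1 - a) *: x + a *: y)%R
   + ((c1 + c2) * Kf a x y)%:E)%E).
  by apply: leeD => //; rewrite lee_fin; apply: ler_wpM2r.
rewrite mulrDl EFinD addeACA.
apply: le_trans; first exact: leeD (HF x y a a01) (HG x y a a01).
rewrite muleDr // ?nNy_adde_def // muleDr // ?nNy_adde_def //.
by rewrite addeACA.
Qed.

Lemma SC_scale {R : realType} {m : nat} (c c0 c1 : R) (F : 'rV[R]_m -> \bar R) :
  0 <= c0 -> c <= c0 * c1 -> SC c1 F -> SC c (fun x => c0%:E * F x)%E.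
Proof.
move=> c00 cle [Fn HF]; split; first by move=> x; exact: mul_nNy.
move=> x y a a01; have K0 := Kf_ge0 a x y a01.
have /andP[a0 a1] := a01.
apply: (@le_trans _ _ (c0%:E * F ((1 - a) *: x + a *: y)%R + ((c0 * c1) * Kf a x y)%:E)%E).
  by apply: leeD => //; rewrite lee_fin; apply: ler_wpM2r.
rewrite -mulrA EFinM -muleDr // ?nNy_adde_def //.
apply: le_trans; first exact: lee_wpmul2l (HF x y a a01).
rewrite muleDr //; last by apply: nNy_adde_def; apply: mul_nNy => //; lra.
by rewrite !muleA (muleC c0%:E) (muleC c0%:E).
Qed.

Lemma SC_affine {R : realType} {m : nat} (L : 'rV[R]_m -> R) :
  (forall x y a, L ((1 - a) *: x + a *: y) = (1 - a) * L x + a * L y) ->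
  SC 0 (fun x => (L x)%:E).
Proof.
move=> HL; split => // x y a _.
by rewrite mul0r adde0 -!EFinM -EFinD lee_fin HL.
Qed.

Lemma SC_quad {R : realType} {m : nat} (c : 'rV[R]_m) :
  SC 1 (fun x => (2^-1 * sqnorm (x - c))%:E).
Proof.
split => // x y a _.
rewrite -!EFinM -!EFinD lee_fin le_eqVlt; apply/orP; left; apply/eqP.
rewrite mul1r /Kf /sqnorm /dotp.
rewrite ?(mulr_sumr, mulr_suml) -!big_split /=; apply/eq_bigr => i _.
rewrite !mxE; ring.
Qed.

Lemma SC_coord {R : realType} {m : nat} (g : R -> \bar R) (i : 'I_m) :
  convex_ext g -> (forall t, g t != -oo%E) -> SC 0 (fun y : 'rV[R]_m => g (y ord0 i)).
Proof.
move=> Hc Hn; split => // x y a a01.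
by rewrite mul0r adde0 !mxE; apply: Hc.
Qed.

Lemma SC_sum {R : realType} {m : nat} (I : Type) (r : seq I) (P : pred I)
  (F : I -> 'rV[R]_m -> \bar R) :
  (forall i, SC 0 (F i)) -> SC 0 (fun y => \sum_(i <- r | P i) F i y)%E.
Proof.
move=> HF; elim: r => [|h t IH].
  apply: (@SC_ext _ _ 0 (fun _ => (0:R)%:E)); first by move=> x; rewrite big_nil.
  by apply: SC_affine => x y a; rewrite !mulr0 addr0.
case Ph: (P h).
  apply: (@SC_ext _ _ 0 (fun y => F h y + \sum_(i <- t | P i) F i y)%E).
    by move=> x; rewrite big_cons Ph.
  by apply: (@SC_add _ _ 0 0 0) => //; rewrite addr0.
apply: (@SC_ext _ _ 0 (fun y => \sum_(i <- t | P i) F i y)%E) => //.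
by move=> x; rewrite big_cons Ph.
Qed.

Lemma SC_strong {R : realType} {m : nat} (sigma : R) (ell : 'rV[R]_m -> \bar R) :
  strongly_convex sigma ell -> (forall x, ell x != -oo%E) -> SC sigma ell.
Proof.
move=> Hs Hn; split => // x y a a01.
have := Hs x y a a01; rewrite leeBrDr //.
by have -> : sigma * Kf a x y = sigma / 2 * a * (1 - a) * sqnorm (y - x) by rewrite /Kf; ring.
Qed.

Lemma SC_argmin {R : realType} {m : nat} (c : R) (F : 'rV[R]_m -> \bar R) (xs y : 'rV[R]_m) :
  SC c F -> 0 <= c -> (forall z, (F xs <= F z)%E) ->
  (F xs + (c / 2 * sqnorm (y - xs))%:E <= F y)%E.
Proof.
move=> [Fn HF] c0 Hmin.
case Fy: (F y) => [r| |]; last 2 first.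
- exact: leey.
- by move: (Fn y); rewrite Fy.
case Fx: (F xs) => [s| |]; last 2 first.
- by move: (Hmin y); rewrite Fx Fy.
- by move: (Fn xs); rewrite Fx.
rewrite -EFinD lee_fin.
set q := sqnorm (y - xs).
have q0 : 0 <= q by exact: sqnorm_ge0.
set D := c / 2 * q.
have D0 : 0 <= D by rewrite /D; apply: mulr_ge0 => //; apply: divr_ge0.
have key : forall a, 0 < a < 1 -> s + D <= r + a * D.
  move=> a a01; have /andP[a0 a1] := a01.
  have h := HF xs y a a01.
  have h2 : (s%:E + (c * Kf a xs y)%:E <= (1 - a)%:E * s%:E + a%:E * r%:E)%E.
    rewrite Fx Fy in h; apply: (le_trans _ h); apply: leeD => //; rewrite -Fx; exact: Hmin.
  move: h2; rewrite -!EFinM -!EFinD lee_fin.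
  have -> : c * Kf a xs y = a * (1 - a) * D by rewrite /Kf /D /q; ring.
  move=> h3; nra.
apply/ler_addgt0Pr => e e0.
pose a := e / (2 * e + D).
have den : 0 < 2 * e + D by lra.
have a0 : 0 < a by apply: divr_gt0.
have a1 : a < 1 by rewrite /a ltr_pdivrMr // mul1r; lra.
have aD : a * D <= e.
  rewrite /a mulrAC ler_pdivrMr //; nra.
have := key a; rewrite a0 a1 => /(_ isT) h; lra.
Qed.

Lemma dotp0r {R : realType} {m : nat} (w : 'rV[R]_m) : dotp w 0 = 0.
Proof. by rewrite /dotp big1 // => i _; rewrite mxE mulr0. Qed.

Lemma dotp0l {R : realType} {m : nat} (w : 'rV[R]_m) : dotp 0 w = 0.
Proof. by rewrite /dotp big1 // => i _; rewrite mxE mul0r. Qed.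

Lemma dotp_mixl {R : realType} {m : nat} (x y c w : 'rV[R]_m) (a : R) :
  dotp ((1 - a) *: x + a *: y - c) w = (1 - a) * dotp (x - c) w + a * dotp (y - c) w.
Proof. rewrite /dotp !mulr_sumr -big_split /=; apply: eq_bigr => i _; rewrite !mxE; ring. Qed.

Lemma dotp_mixr {R : realType} {m : nat} (x y c w : 'rV[R]_m) (a : R) :
  dotp w ((1 - a) *: x + a *: y - c) = (1 - a) * dotp w (x - c) + a * dotp w (y - c).
Proof. rewrite /dotp !mulr_sumr -big_split /=; apply: eq_bigr => i _; rewrite !mxE; ring. Qed.

Lemma EFinD' {R : realType} (r s : R) : (r%:E + s%:E)%E = (r + s)%:E.
Proof. by []. Qed.

Lemma EFinM' {R : realType} (r s : R) : (r%:E * s%:E)%E = (r * s)%:E.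
Proof. by []. Qed.

Lemma aseqS {R : realType} (n : nat) (Rp sigma : R) (k : nat) :
  aseq n Rp sigma k.+3 = Num.min ((1 + (n.-1)%:R^-1) * aseq n Rp sigma k.+2)
      (Num.sqrt (n%:R * (n%:R + sigma * Aseq n Rp sigma k.+2)) / (2 * Rp)) /\
  Aseq n Rp sigma k.+3 = Aseq n Rp sigma k.+2 + aseq n Rp sigma k.+3.
Proof. by split. Qed.

Local Open Scope ereal_scope.

Theorem lemma4 (R : realType) (n d : nat) (b : 'I_n -> 'rV[R]_d) (Rp sigma : R)
  (gs : 'I_n -> R -> \bar R) (ell : 'rV[R]_d -> \bar R)
  (x0 : 'rV[R]_d) (y0 : 'rV[R]_n) (u : 'rV[R]_d) (v : 'rV[R]_n)
  (xs : nat -> 'rV[R]_d) (ys : nat -> 'rV[R]_n) (j : nat -> 'I_n) :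
  (2 <= n)%N ->
  (0 < Rp)%R ->
  (forall i, enorm (b i) <= Rp)%R ->
  (forall i, proper_fun (gs i)) ->
  (forall i, lower_semicontinuous (gs i)) ->
  (forall i, convex_ext (gs i)) ->
  proper_fun ell ->
  lower_semicontinuous ell ->
  (0 <= sigma)%R ->
  strongly_convex sigma ell ->
  ell u < +oo ->
  gstar n gs v < +oo ->
  vrpda2_run n d b Rp sigma gs ell x0 y0 u v xs ys j ->
  forall k, (2 <= k)%N ->
    psi n d b Rp sigma gs x0 y0 v xs j k (ys k) <=
      \sum_(2 <= i < k.+1) (aseq n Rp sigma i)%:E * gs (j i) (v ord0 (j i))
      + (aseq n Rp sigma 1)%:E * gstar n gs v
      + (n%:R / 2 * sqnorm (v - y0))%:E
      - (n%:R / 2 * sqnorm (v - ys k))%:E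
    /\
    phi n d b Rp sigma ell x0 u ys j k (xs k) <=
      (Aseq n Rp sigma k)%:E * ell u
      + (n%:R / 2 * sqnorm (u - x0))%:E
      - ((n%:R + sigma * Aseq n Rp sigma k) / 2 * sqnorm (u - xs k))%:E.
Proof.
move=> n2 Rp0 _ gprop _ gconv ellprop _ sig0 ellsc ellu _ [Hx0 Hy0 Hy1 Hx1 Hk] k k2.
have gn : forall i t, gs i t != -oo by move=> i t; case: (gprop i) => h _; exact: h.
have elln : forall x, ell x != -oo by case: ellprop.
have n0 : (0 <= n%:R :> R)%R by exact: ler0n.
have at10 : (0 <= at1 Rp)%R by rewrite /at1 invr_ge0 mulr_ge0 // ltW.
have a_ge0 : forall i, (0 <= aseq n Rp sigma i)%R.
  have a10 : (0 <= a1 n Rp)%R by rewrite /a1 mulr_ge0.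
  have a20 : (0 <= aseq n Rp sigma 2)%R by rewrite /aseq /= divr_ge0.
  suff h : forall i, (0 <= aseq n Rp sigma i.+2)%R.
    by case=> [|[|i]] //; rewrite /aseq /=.
  elim=> [|i IH] //; rewrite (aseqS n Rp sigma i).1 le_min; apply/andP; split.
    by apply: mulr_ge0 => //; rewrite addr_ge0 // invr_ge0.
  by apply: divr_ge0; [exact: sqrtr_ge0 | rewrite mulr_ge0 // ltW].
have Arec : forall k, (0 < k)%N ->
    Aseq n Rp sigma k.+1 = (Aseq n Rp sigma k + aseq n Rp sigma k.+1)%R.
  by case=> [|[|k']] // _; exact: (aseqS n Rp sigma k').2.
have gstarSC : SC 0 (gstar n gs).
  apply: (@SC_scale _ _ 0 (n%:R^-1) 0); [by rewrite invr_ge0 | by rewrite mulr0 |].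
  by apply: SC_sum => i; apply: SC_coord.
have psiSC : forall k, (0 < k)%N -> SC n%:R (psi n d b Rp sigma gs x0 y0 v xs j k).
  elim=> [//|[|k'] IH _].
    apply: (@SC_scale _ _ n%:R n%:R 1); [exact: n0 | by rewrite mulr1 |].
    apply: (@SC_add _ _ 1 1 0); [by rewrite addr0 | exact: SC_quad |].
    apply: (@SC_scale _ _ 0 (at1 Rp) 0); [exact: at10 | by rewrite mulr0 |].
    apply: (@SC_add _ _ 0 0 0); [by rewrite addr0 | | exact: gstarSC].
    by apply: SC_affine => x y a; rewrite dotp_mixr.
  apply: (@SC_add _ _ n%:R n%:R 0); [by rewrite addr0 | exact: IH |].
  apply: (@SC_scale _ _ 0 (aseq n Rp sigma k'.+2) 0); [exact: a_ge0 | by rewrite mulr0 |].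
  apply: (@SC_add _ _ 0 0 0); [by rewrite addr0 | | by apply: SC_coord].
  by apply: SC_affine => x y a; rewrite !mxE; ring.
have ellSC : SC sigma ell by exact: SC_strong.
have phiSC : forall k, (0 < k)%N ->
    SC (n%:R + sigma * Aseq n Rp sigma k) (phi n d b Rp sigma ell x0 u ys j k).
  elim=> [//|[|k'] IH _].
    apply: (@SC_scale _ _ _ n%:R (1 + at1 Rp * sigma)); [exact: n0 | |].
      by rewrite le_eqVlt; apply/orP; left; apply/eqP; rewrite /Aseq /= /a1; ring.
    apply: (@SC_add _ _ _ 1 (at1 Rp * sigma)); [exact: lexx | exact: SC_quad |].
    apply: (@SC_scale _ _ _ (at1 Rp) sigma); [exact: at10 | exact: lexx |].
    apply: (@SC_add _ _ _ 0 sigma); [by rewrite add0r | | exact: ellSC].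
    by apply: SC_affine => x y a; rewrite dotp_mixl.
  apply: (@SC_add _ _ _ (n%:R + sigma * Aseq n Rp sigma k'.+1) (aseq n Rp sigma k'.+2 * sigma)).
  - by rewrite Arec // le_eqVlt; apply/orP; left; apply/eqP; ring.
  - exact: IH.
  apply: (@SC_scale _ _ _ (aseq n Rp sigma k'.+2) sigma); [exact: a_ge0 | exact: lexx |].
  apply: (@SC_add _ _ _ 0 sigma); [by rewrite add0r | | exact: ellSC].
  by apply: SC_affine => x y a; rewrite dotp_mixl.
have psiv : forall k, (0 < k)%N -> psi n d b Rp sigma gs x0 y0 v xs j k v =
      \sum_(2 <= i < k.+1) (aseq n Rp sigma i)%:E * gs (j i) (v ord0 (j i))
      + (aseq n Rp sigma 1)%:E * gstar n gs v
      + (n%:R / 2 * sqnorm (v - y0))%:E.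
  elim=> [//|[|k'] IH _].
    rewrite /= /psit1 /psi0 subrr dotp0r add0e big_geq // add0e.
    rewrite muleDr //.
    rewrite muleA -EFinM addeC; congr (_ + _).
    by rewrite mulrA.
  have -> : psi n d b Rp sigma gs x0 y0 v xs j k'.+2 v =
    psi n d b Rp sigma gs x0 y0 v xs j k'.+1 v + (aseq n Rp sigma k'.+2)%:E *
        ((- dotp (b (j k'.+2)) (xbar n d Rp sigma xs k'.+1) * (v ord0 (j k'.+2) - v ord0 (j k'.+2)))%R%:E
         + gs (j k'.+2) (v ord0 (j k'.+2))) by [].
  rewrite IH // subrr mulr0 add0e (big_nat_recr k'.+2) //=.
  by rewrite addeAC; congr (_ + _); rewrite addeAC.
have [e Eu] : exists e, ell u = e%:E.
  move: ellu (elln u); case: (ell u) => [e _ _| //| //]; by exists e.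
have phiu : forall k, (0 < k)%N -> phi n d b Rp sigma ell x0 u ys j k u =
      (Aseq n Rp sigma k * e + n%:R / 2 * sqnorm (u - x0))%:E.
  elim=> [//|[|k'] IH _].
    rewrite /= /phit1 /phi0 subrr dotp0l Eu.
    apply: (@eq_trans _ _ ((n%:R * (2^-1 * sqnorm (u - x0) + at1 Rp * (0 + e)))%R%:E)); first by [].
    by congr EFin; rewrite /Aseq /= /a1; ring.
  have -> : phi n d b Rp sigma ell x0 u ys j k'.+2 u =
    phi n d b Rp sigma ell x0 u ys j k'.+1 u + (aseq n Rp sigma k'.+2)%:E *
        ((dotp (u - u) (zseq n d b ys j k'.+1 + (ys k'.+2 ord0 (j k'.+2) - ys k'.+1 ord0 (j k'.+2)) *: b (j k'.+2)))%R%:E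
         + ell u) by [].
  rewrite IH // subrr dotp0l Eu.
  apply: (@eq_trans _ _ ((Aseq n Rp sigma k'.+1 * e + n%:R / 2 * sqnorm (u - x0)
      + aseq n Rp sigma k'.+2 * (0 + e))%R%:E)); first by [].
  by congr EFin; rewrite (Arec k'.+1) //; ring.
have k1 : (0 < k)%N by exact: ltnW.
split.
  have h := @SC_argmin _ _ n%:R _ (ys k) v (psiSC k k1) n0 (proj1 (Hk k k2)).
  by rewrite leeBrDr // -psiv.
have A_ge0 : forall k, (0 < k)%N -> (0 <= Aseq n Rp sigma k)%R.
  elim=> [//|[|k'] IH _]; first by rewrite /Aseq /= /a1 mulr_ge0.
  by rewrite Arec // addr_ge0 // IH.
have c0 : (0 <= n%:R + sigma * Aseq n Rp sigma k)%R.
  by apply: addr_ge0 => //; apply: mulr_ge0 => //; exact: A_ge0.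
have h := @SC_argmin _ _ _ _ (xs k) u (phiSC k k1) c0 (proj2 (Hk k k2)).
rewrite leeBrDr // Eu -EFinM -(EFinD (_ * e)) -phiu //.
Qed.
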